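(* Let $q>1$ and $n>1$ be integers and let $S$ be a special orientable sequence of order $n$ over $\mathbb{Z}_q$ (an $\mathcal{SOS}_q(n)$). Then the period of $S$ is at most \[ \frac{q^n-q^{(n+1)/2}-q^{(n-1)/2}+1}{2} \text{ if $q$ and $n$ are both odd;}\qquad \frac{q^n-2q^{n/2}+1}{2} \text{ if $q$ is odd and $n$ is even;} \] \[ \frac{q^n-q^{(n+1)/2}-2q^{(n-1)/2}+2^{(n+3)/2}-2^{(n+1)/2}}{2} \text{ if $q$ is even and $n$ is odd;}\qquad \frac{q^n-2q^{n/2}+2^{(n+2)/2}-2^{n/2}}{2} \text{ if $q$ and $n$ are both even.} \]
   Context: For a periodic sequence $S=(s_i)$ over $\mathbb{Z}_q$ write $\mathbf{s}_n(i)=(s_i,s_{i+1},\ldots,s_{i+n-1})$. For an $n$-tuple $\mathbf{u}=(u_0,\ldots,u_{n-1})$, its reverse is $\mathbf{u}^R=(u_{n-1},\ldots,u_0)$ and its negative is $-\mathbf{u}=(-u_0,\ldots,-u_{n-1})$. A $q$-ary $n$-window sequence is a periodic sequence over $\mathbb{Z}_q$ of period $m$ such that $\mathbf{s}_n(i)=\mathbf{s}_n(j)$ implies $i\equiv j\pmod m$. It is an orientable sequence of order $n$ ($\mathcal{OS}_q(n)$) if moreover $\mathbf{s}_n(i)\neq\mathbf{s}_n(j)^R$ for all $i,j$; negative orientable ($\mathcal{NOS}_q(n)$) if $\mathbf{s}_n(i)\neq-\mathbf{s}_n(j)^R$ for all $i,j$; and special orientable ($\mathcal{SOS}_q(n)$)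 if it is both orientable and negative orientable. *)

(* Defs.v *)
From mathcomp Require Import all_boot all_order all_algebra.
Set Implicit Arguments. Unset Strict Implicit. Unset Printing Implicit Defensive.
Import GRing.Theory Num.Theory.
Local Open Scope ring_scope.

Definition periodic (q : nat) (s : nat -> 'Z_q) (m : nat) : Prop :=
  (0 < m)%N /\ forall i, s (i + m)%N = s i.

Definition window (q : nat) (s : nat -> 'Z_q) (n i : nat) : seq 'Z_q :=
  [seq s (i + k)%N | k <- iota 0 n].

Definition negseq (q : nat) (u : seq 'Z_q) : seq 'Z_q := map (fun x => - x) u.

Definition n_window (q : nat) (s : nat -> 'Z_q) (n m : nat) : Prop :=
  periodic s m /\
  forall i j, window s n i = window s n j -> i = j %[mod m].

Definition orientable (q : nat) (s : nat -> 'Z_q) (n m : nat) : Prop :=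
  n_window s n m /\ forall i j, window s n i <> rev (window s n j).

Definition neg_orientable (q : nat) (s : nat -> 'Z_q) (n m : nat) : Prop :=
  n_window s n m /\ forall i j, window s n i <> negseq (rev (window s n j)).

Definition special_orientable (q : nat) (s : nat -> 'Z_q) (n m : nat) : Prop :=
  orientable s n m /\ neg_orientable s n m.

(* Twice the upper bound of the theorem, as an integer. *)
Definition sos_bound2 (q n : nat) : int :=
  let Q : int := q%:Z in
  if odd q then
    if odd n then Q ^+ n - Q ^+ ((n + 1) %/ 2) - Q ^+ ((n - 1) %/ 2) + 1
    else Q ^+ n - 2 * Q ^+ (n %/ 2) + 1
  else
    if odd n then Q ^+ n - Q ^+ ((n + 1) %/ 2) - 2 * Q ^+ ((n - 1) %/ 2)
                  + 2 ^+ ((n + 3) %/ 2) - 2 ^+ ((n + 1) %/ 2)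
    else Q ^+ n - 2 * Q ^+ (n %/ 2) + 2 ^+ ((n + 2) %/ 2) - 2 ^+ (n %/ 2).

(* Main.v *)
Require Import Defs.
From mathcomp Require Import all_boot all_order all_algebra.
From mathcomp Require Import zify.
Local Open Scope ring_scope.
Import GRing.Theory.
Set Implicit Arguments. Unset Strict Implicit.

Section Aux.
Variables q n : nat.
Hypothesis hq : (1 < q)%N.

Lemma cardZq : #|{: 'Z_q}| = q.
Proof. by rewrite card_ord Zp_cast. Qed.

Definition mkt (F : nat -> 'Z_q) : n.-tuple 'Z_q :=
  @Tuple n _ (mkseq F n) (introT eqP (size_mkseq F n)).

Lemma nth_mkt F i : (i < n)%N -> nth 0 (mkt F) i = F i.
Proof. by move=> hi; rewrite /= nth_mkseq. Qed.

Definition gat p (g : {ffun 'I_p -> 'Z_q}) (i : nat) : 'Z_q :=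
  if insub i is Some o then g o else 0.

Lemma gatE p (g : {ffun 'I_p -> 'Z_q}) (o : 'I_p) : gat g o = g o.
Proof.
rewrite /gat; case: insubP => [o' _ /val_inj -> //|].
by rewrite ltn_ord.
Qed.

Definition Pset := [set u : n.-tuple 'Z_q | rev u == u :> seq 'Z_q].
Definition Aset := [set u : n.-tuple 'Z_q | negseq (rev u) == u :> seq 'Z_q].
Definition Xset := [set z : 'Z_q | z + z == 0].
Definition Mid := if odd n then Xset else [set 0 : 'Z_q].

Lemma P_lb : (q ^ (n - n %/ 2) <= #|Pset|)%N.
Proof.
pose h := (n - n %/ 2)%N.
pose fP (g : {ffun 'I_h -> 'Z_q}) := mkt (fun j => gat g (minn j (n.-1 - j)%N)).
have inj : injective fP.
  move=> g1 g2 /(congr1 (fun t : n.-tuple _ => tval t)) E.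
  apply/ffunP => o.
  have := congr1 (fun s => nth 0 s (val o)) E.
  have ho := ltn_ord o.
  rewrite /= !nth_mkseq; try (move: ho; rewrite /h; lia).
  have -> : minn o (n.-1 - o)%N = o by move: ho; rewrite /h; lia.
  by rewrite !gatE.
have := card_imset [set: {ffun 'I_h -> 'Z_q}] inj.
rewrite cardsT card_ffun cardZq card_ord => <-.
apply: subset_leq_card; apply/subsetP => u /imsetP [g _ ->].
rewrite inE; apply/eqP; apply: (eq_from_nth (x0 := 0)); first by rewrite size_rev.
move=> i; rewrite size_rev size_tuple => hi.
rewrite nth_rev ?size_tuple // !nth_mkt //; try lia.
congr gat; lia.
Qed.

Lemma A_lb : (q ^ (n %/ 2) * #|Mid| <= #|Aset|)%N.
Proof.
pose k := (n %/ 2)%N.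
pose fA (p : {ffun 'I_k -> 'Z_q} * 'Z_q) := mkt (fun j =>
  if (j < (n.-1 - j)%N)%N then gat p.1 j else if j == (n.-1 - j)%N then p.2
  else - gat p.1 (n.-1 - j)%N).
pose D := setX [set: {ffun 'I_k -> 'Z_q}] Mid.
have MidE z : z \in Mid -> z + z = 0.
  by rewrite /Mid; case: (odd n); rewrite inE => /eqP ->; rewrite ?addr0.
have inj : {in D &, injective fA}.
  move=> [g1 z1] [g2 z2]; rewrite !inE /= => hz1 hz2.
  move=> /(congr1 (fun t : n.-tuple _ => tval t)) E.
  have E' i : (i < n)%N -> nth 0 (mkt (fun j =>
  if (j < (n.-1 - j)%N)%N then gat g1 j else if j == (n.-1 - j)%N then z1
  else - gat g1 (n.-1 - j)%N)) i = nth 0 (mkt (fun j =>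
  if (j < (n.-1 - j)%N)%N then gat g2 j else if j == (n.-1 - j)%N then z2
  else - gat g2 (n.-1 - j)%N)) i by move=> _; rewrite E.
  congr pair.
    apply/ffunP => o; have ho := ltn_ord o.
    have := E' o; rewrite !nth_mkt /=; try (move: ho; rewrite /k; lia).
    have -> : (o < (n.-1 - o)%N)%N = true by move: ho; rewrite /k; lia.
    rewrite !gatE; apply; move: ho; rewrite /k; lia.
  move: hz1 hz2; rewrite /Mid; case hn: (odd n); last by rewrite !inE => /eqP -> /eqP ->.
  move=> _ _.
  have h2 : (n %% 2 = 1)%N by rewrite modn2 hn.
  have := E' k; rewrite !nth_mkt /=; try (rewrite /k; lia).
  have -> : (k < (n.-1 - k)%N)%N = false by rewrite /k; lia.
  have -> : (k == (n.-1 - k)%N) = true by rewrite /k; lia.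
  by apply; rewrite /k; lia.
have := card_in_imset inj.
rewrite cardsX cardsT card_ffun cardZq card_ord => <-.
apply: subset_leq_card; apply/subsetP => u /imsetP [[g z] hD ->].
move: hD; rewrite inE /= => /andP [_ /MidE hz].
rewrite inE; apply/eqP; apply: (eq_from_nth (x0 := 0)).
  by rewrite size_map size_rev.
move=> i; rewrite size_map size_rev size_tuple => hi.
rewrite (nth_map 0) ?size_rev ?size_tuple // nth_rev ?size_tuple // !nth_mkt //; try lia.
have -> : (n.-1 - (n - i.+1) = i)%N by lia.
case: (ltngtP i (n.-1 - i)%N) => H.
- have -> : (n - i.+1 < i)%N = false by lia.
  have -> : ((n - i.+1)%N == i) = false by lia.
  by rewrite opprK.
- have -> : (n - i.+1 < i)%N = true by lia.
  by have -> : (n - i.+1 = n.-1 - i)%N by lia.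
- have -> : (n - i.+1 < i)%N = false by lia.
  have -> : ((n - i.+1)%N == i) = true by lia.
  by apply/eqP; rewrite eq_sym -addr_eq0 /= hz.
Qed.

Lemma PA_ub : (#|Pset :&: Aset| <= #|Xset| ^ (n - n %/ 2))%N.
Proof.
pose h := (n - n %/ 2)%N.
pose fB (u : n.-tuple 'Z_q) : {ffun 'I_h -> 'Z_q} := [ffun o : 'I_h => nth 0 u o].
have palE (u : n.-tuple 'Z_q) i : u \in Pset -> (i < n)%N -> nth 0 u i = nth 0 u (n - i.+1)%N.
  rewrite inE => /eqP E hi.
  by rewrite -{1}E nth_rev ?size_tuple.
have antE (u : n.-tuple 'Z_q) i : u \in Aset -> (i < n)%N -> nth 0 u i = - nth 0 u (n - i.+1)%N.
  rewrite inE => /eqP E hi.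
  by rewrite -{1}E (nth_map 0) ?size_rev ?size_tuple // nth_rev ?size_tuple.
have inj : {in Pset :&: Aset &, injective fB}.
  move=> u1 u2; rewrite !inE => /andP [p1 _] /andP [p2 _] E.
  apply: val_inj; apply: (eq_from_nth (x0 := 0)); first by rewrite !size_tuple.
  move=> i; rewrite size_tuple => hi.
  have key j (hj : (j < h)%N) : nth 0 u1 j = nth 0 u2 j.
    by have := congr1 (fun f : {ffun 'I_h -> 'Z_q} => f (Ordinal hj)) E; rewrite !ffunE.
  case: (ltnP i h) => hih; first exact: key.
  rewrite (palE u1 i) ?inE // (palE u2 i) ?inE //.
  apply: key; rewrite /h; lia.
have := card_in_imset inj => <-.
apply: (@leq_trans #|@ffun_on_mem 'I_h _ (mem Xset)|); last first.
  by rewrite card_ffun_on card_ord.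
apply: subset_leq_card; apply/subsetP => f /imsetP [u].
rewrite inE => /andP [pu au] ->.
apply/ffun_onP => o; rewrite ffunE inE.
have ho : (o < n)%N by have := ltn_ord o; rewrite /h; lia.
by rewrite {1}(antE u o au ho) -(palE u o pu ho) addNr.
Qed.

Lemma X_char (z : 'Z_q) : z + z = 0 -> (val z = 0 \/ (val z).*2 = q)%N.
Proof.
have hz : (z < q)%N by case: z => v hv /=; rewrite Zp_cast in hv.
move=> /(congr1 val) /=; move: (nat_of_ord z) hz => z' hz.
rewrite Zp_cast // => h0.
have := divn_eq (z' + z')%N q; rewrite h0 addn0.
have : ((z' + z') %/ q < 2)%N by rewrite ltn_divLR; lia.
case: ((z' + z') %/ q)%N => [|[|d]] //; lia.
Qed.

Lemma X_odd : odd q -> (#|Xset| <= 1)%N.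
Proof.
move=> oq; rewrite -(cards1 (0 : 'Z_q)); apply: subset_leq_card.
apply/subsetP => z; rewrite !inE => /eqP /X_char [h|h].
  by apply/eqP/val_inj.
by exfalso; move: oq; rewrite -h odd_double.
Qed.

Definition hz : 'Z_q := inord (q %/ 2).

Lemma val_hz : nat_of_ord hz = (q %/ 2)%N.
Proof. by rewrite /hz inordK // Zp_cast //; lia. Qed.

Lemma X_even : ~~ odd q -> (#|Xset| <= 2)%N /\ (odd n -> 2 <= #|Mid|)%N.
Proof.
move=> eq.
have e2 : (q %% 2 = 0)%N by rewrite modn2 (negbTE eq).
split.
  apply: (@leq_trans #|[set (0 : 'Z_q); hz]|); last by rewrite cards2 ltnS leq_b1.
  apply: subset_leq_card; apply/subsetP => z; rewrite !inE => /eqP /X_char [h|h].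
    by apply/orP; left; apply/eqP/val_inj.
  apply/orP; right; apply/eqP/val_inj; rewrite /= val_hz.
  move: h; rewrite -muln2 /=; lia.
move=> on; rewrite /Mid on.
have -> : 2%N = #|[set (0 : 'Z_q); hz]|.
  rewrite cards2; suff -> : ((0 : 'Z_q) != hz) by [].
  apply/eqP => /(congr1 val); rewrite /= val_hz /=.
  lia.
apply: subset_leq_card; apply/subsetP => z; rewrite !inE => /orP [] /eqP ->.
  by rewrite addr0.
apply/eqP/val_inj => /=; rewrite /= val_hz Zp_cast //.
have -> : (q %/ 2 + q %/ 2 = q)%N by lia.
by rewrite modnn.
Qed.

Lemma Mid_ge1 : (1 <= #|Mid|)%N.
Proof.
rewrite -(cards1 (0 : 'Z_q)); apply: subset_leq_card; apply/subsetP => z.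
rewrite inE => /eqP ->; rewrite /Mid; case: (odd n); rewrite !inE ?addr0 //.
Qed.

End Aux.

Lemma pwz (a b : nat) : (a%:Z ^+ b = (a ^ b)%N%:Z)%R.
Proof. elim: b => [|b IH]; first by rewrite expr0 expn0. by rewrite exprS IH expnS PoszM. Qed.

Theorem theorem2p1 (q n m : nat) (s : nat -> 'Z_q) :
  (1 < q)%N -> (1 < n)%N -> special_orientable s n m ->
  (2 * m)%:Z <= sos_bound2 q n.
Proof.
move=> hq hn [[[[m0 per] nw] ori] [_ nori]].
pose wt (i : nat) : n.-tuple 'Z_q := mkt n (fun k => s (i + k)%N).
pose W := [set wt i | i : 'I_m].
pose R := [set rev_tuple (wt i) | i : 'I_m].
have cW : #|W| = m.
  rewrite card_imset ?card_ord // => i j /(congr1 val) E.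
  by apply/val_inj => /=; have := nw i j E; rewrite !modn_small.
have cR : #|R| = m.
  rewrite card_imset ?card_ord // => i j /(congr1 (fun t => rev (tval t))) /=.
  rewrite !revK => E.
  by apply/val_inj => /=; have := nw i j E; rewrite !modn_small.
pose PA := Pset q n :|: Aset q n.
have WR : W :&: R = set0.
  apply/setP => u; rewrite !inE; apply/negP => /andP [/imsetP [i _ ->] /imsetP [j _ E]].
  exact: (ori i j (congr1 val E)).
have WRPA : (W :|: R) :&: PA = set0.
  apply/setP => u; rewrite !inE.
  apply/negP => /andP [/orP [/imsetP [i _ ->] | /imsetP [i _ ->]] /orP [] /eqP E].
  - exact: (ori i i (esym E)).
  - exact: (nori i i (esym E)).
  - move: E => /=; rewrite revK => E; exact: (ori i i E).
  - move: E => /=; rewrite revK => E.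
    have := congr1 rev E; rewrite revK /negseq -map_rev => E'.
    exact: (nori i i (esym E')).
have card1 : (#|W :|: R| = 2 * m)%N.
  by have := cardsUI W R; rewrite WR cards0 addn0 cW cR => ->; lia.
have total : (#|W :|: R| + #|PA| <= q ^ n)%N.
  have := cardsUI (W :|: R) PA; rewrite WRPA cards0 addn0 => <-.
  by apply: leq_trans (max_card _) _; rewrite card_tuple cardZq.
have hPA := cardsUI (Pset q n) (Aset q n).
have h1 := P_lb n hq.
have h2 := A_lb n hq.
have h3 := PA_ub n hq.
have h4 := Mid_ge1 q n.
rewrite /sos_bound2 !pwz.
have two : (1 + 1 = 2)%N by [].
rewrite !two.
set h := (n - n %/ 2)%N in h1 h3.
set k := (n %/ 2)%N in h2.
have hpos : (0 < h)%N by rewrite /h; lia.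
have hk : (0 < q ^ k)%N by rewrite expn_gt0; apply/orP; left; lia.
rewrite /PA in total.
case oq: (odd q).
  have hX1 : (#|Xset q| ^ h <= 1)%N.
    by rewrite -(exp1n h) leq_exp2r //; apply: X_odd.
  have hM : (q ^ k <= q ^ k * #|Mid q n|)%N by rewrite leq_pmulr.
  case on: (odd n).
    have e1 : ((n + 1) %/ 2 = h)%N by rewrite /h; have := modn2 n; rewrite on; lia.
    have e2 : ((n - 1) %/ 2 = k)%N by rewrite /k; have := modn2 n; rewrite on; lia.
    rewrite e1 e2; lia.
  have e1 : (n %/ 2 = h)%N by rewrite /h; have := modn2 n; rewrite on; lia.
  have e2 : (k = h)%N by rewrite /k e1.
  rewrite e2 in hM hk h2; rewrite e1; lia.
have [hX hMo] := X_even n hq (negbT oq).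
have hX2 : (#|Xset q| ^ h <= 2 ^ h)%N by rewrite leq_exp2r.
case on: (odd n).
  have hM : (q ^ k * 2 <= q ^ k * #|Mid q n|)%N by rewrite leq_pmul2l //; apply: hMo.
  have e1 : ((n + 1) %/ 2 = h)%N by rewrite /h; have := modn2 n; rewrite on; lia.
  have e2 : ((n - 1) %/ 2 = k)%N by rewrite /k; have := modn2 n; rewrite on; lia.
  have e3 : ((n + 3) %/ 2 = h.+1)%N by rewrite /h; have := modn2 n; rewrite on; lia.
  rewrite e1 e2 e3 expnS; lia.
have hM : (q ^ k <= q ^ k * #|Mid q n|)%N by rewrite leq_pmulr.
have e1 : (n %/ 2 = h)%N by rewrite /h; have := modn2 n; rewrite on; lia.
have e3 : ((n + 2) %/ 2 = h.+1)%N by rewrite /h; have := modn2 n; rewrite on; lia.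
have e2 : (k = h)%N by rewrite /k e1.
rewrite e2 in hM hk h2; rewrite e3 e1 expnS; lia.
Qed.
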